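(* Let $n\ge3$ be an even integer. Then the number of edges of $OD(\mathcal{D}_n)$ is $$|E(OD(\mathcal{D}_n))|=\frac12\Big(2n-1+(n+1)\sum_{\lambda\mid\frac n2}\phi(2\lambda)+\sum_{\substack{m\mid n,\ m>1\\ m\text{ odd}}}\Big(m-2\phi(m)+\sum_{\lambda\mid\frac nm}\phi(\lambda m)\Big)\phi(m)+\sum_{\substack{m\mid n,\ m>2\\ m\text{ even}}}\Big(n+m-2\phi(m)+\sum_{\lambda\mid\frac nm}\phi(\lambda m)\Big)\phi(m)\Big),$$ where $\phi$ is Euler's totient function.
   Context: The dihedral group $\mathcal{D}_n$ ($n\ge3$) is the group $\langle a,b\mid a^n=b^2=(ab)^2=e\rangle$ of order $2n$. For a finite group $G$, $o(x)$ denotes the order of $x\in G$. The order-divisor graph $OD(G)$ is the simple undirected graph with vertex set $G$, in which two distinct vertices $x,y$ are adjacent if and only if $o(x)\neq o(y)$ and either $o(x)\mid o(y)$ or $o(y)\mid o(x)$. *)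

(* Defs.v *)
From HB Require Import structures.
From mathcomp Require Import all_boot all_fingroup all_solvable.
Set Implicit Arguments. Unset Strict Implicit. Unset Printing Implicit Defensive.

(* Adjacency of the order-divisor graph OD(G): o(x) <> o(y) and
   o(x) | o(y) or o(y) | o(x).  (Different orders force x <> y.) *)
Definition od_adj (gT : finGroupType) (x y : gT) : bool :=
  (#[x]%g != #[y]%g) && ((#[x]%g %| #[y]%g) || (#[y]%g %| #[x]%g)).

Definition od_edges (gT : finGroupType) : {set {set gT}} :=
  [set [set p.1; p.2] | p in [set p : gT * gT | od_adj p.1 p.2]].

(* Main.v *)
Require Import Defs.
From HB Require Import structures.
From mathcomp Require Import all_boot all_order all_algebra all_fingroup all_solvable.
From mathcomp Require Import zify.
Import GRing.Theory.
Set Implicit Arguments. Unset Strict Implicit. Unset Printing Implicit Defensive.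


Section LayerA.
Local Open Scope group_scope.
Variables (gT : finGroupType) (q : nat) (x y : gT).
Hypotheses (q_gt0 : 0 < q) (defG : <[x]> <*> <[y]> = [set: gT])
  (cardG : #|[set: gT]| = q.*2) (xq : x ^+ q = 1) (y2 : y ^+ 2 = 1)
  (xy : x ^ y = x^-1).

Lemma nxy : <[y]> \subset 'N(<[x]>).
Proof.
by rewrite cycle_subG; apply/normP; rewrite -cycleJ xy cycleV.
Qed.

Lemma defGM : <[x]> * <[y]> = [set: gT].
Proof. by rewrite -(norm_joinEr nxy). Qed.

Lemma ox_oy : #[x] = q /\ #[y] = 2 /\ #|<[x]> :&: <[y]>| = 1%N.
Proof.
have dx : #[x] %| q by rewrite order_dvdn xq.
have dy : #[y] %| 2 by rewrite order_dvdn y2.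
have hx := dvdn_leq q_gt0 dx. have hy := dvdn_leq (isT : 0 < 2) dy.
have := mul_cardG <[x]>%G <[y]>%G.
rewrite /= defGM cardG -!orderE.
have := cardG_gt0 (<[x]> :&: <[y]>)%G => /= hI.
move=> E.
have ox0 := order_gt0 x. have oy0 := order_gt0 y.
have hI1 : #|<[x]> :&: <[y]>| = 1%N.
  have : q.*2 * #|<[x]> :&: <[y]>| <= q * 2 by rewrite -E leq_mul.
  rewrite -mul2n => H; move: H hI; move: #|_| => I H hI; nia.
rewrite hI1 muln1 -mul2n in E.
have h1 : #[x] * #[y] <= #[x] * 2 by rewrite leq_mul2l hy orbT.
have h2 : #[x] * #[y] <= q * #[y] by rewrite leq_mul2r hx orbT.
split; last split => //.
  move: E h1 h2 hx hy ox0 oy0; move: #[x] #[y] => a b; nia.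
move: E h1 h2 hx hy ox0 oy0; move: #[x] #[y] => a b; nia.
Qed.

Lemma yV : y^-1 = y.
Proof. by apply/eqP; rewrite eq_invg_mul -{2}(expg1 y) -expgS y2. Qed.

Lemma y_notin : y \notin <[x]>.
Proof.
have [_ [oy oI]] := ox_oy.
apply/negP => yx.
have : <[y]> \subset <[x]> by rewrite cycle_subG.
move/setIidPr; move: oI => /[swap] -> .
by rewrite -orderE oy.
Qed.

Lemma ord_out z : z \notin <[x]> -> #[z] = 2.
Proof.
have : z \in <[x]> * <[y]> by rewrite defGM inE.
have [_ [oy _]] := ox_oy.
case/mulsgP => u v ux; rewrite cycle2g // => /set2P[] -> -> {z v}.
  by rewrite mulg1 ux.
move=> uyx.
case/cycleP: ux uyx => i -> uyx.
have e : y * x ^+ i * y = x ^- i.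
  by rewrite -{1}yV -mulgA -conjgE conjXg xy expVgn.
have sq : (x ^+ i * y) ^+ 2 = 1.
  by rewrite expgS expg1 -!mulgA (mulgA y) e mulgV.
have : #[x ^+ i * y] %| 2 by rewrite order_dvdn sq.
have : #[x ^+ i * y] != 1%N.
  rewrite order_eq1; apply/negP => /eqP h.
  move: uyx; rewrite h; rewrite group1 //.
case: #[_] (order_gt0 (x ^+ i * y)) => [|[|[|k]]] //.
Qed.

Lemma card_in d : #|[set z in <[x]> | #[z] == d]| = ((d %| q) * totient d)%N.
Proof.
have [ox _] := ox_oy.
case: (boolP (d %| q)) => dq; last first.
  rewrite mul0n; apply/eqP; rewrite cards_eq0; apply/eqP/setP => z; rewrite !inE.
  apply/negP => /andP [zx /eqP zd].
  by have := order_dvdG zx; rewrite -orderE ox zd (negbTE dq).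
have d0 : 0 < d by move: dq; case: d => //; rewrite dvd0n => /eqP h; move: q_gt0; rewrite h.
rewrite mul1n.
set w := x ^+ (q %/ d).
have ow : #[w] = d by rewrite orderXdiv ox ?dvdn_div // divnA // mulKn.
rewrite -{2}ow totient_gen; apply: eq_card => z; rewrite !inE /generator.
apply/andP/idP.
  case=> zx /eqP zd.
  by rewrite (eq_subG_cyclic (cycle_cyclic x)) ?cycle_subG ?mem_cycle // -!orderE ow zd.
move/eqP => e. have zw : z \in <[w]> by rewrite e cycle_id.
split; last by rewrite orderE -e -orderE ow.
by apply: (subsetP _ _ zw); rewrite cycle_subG mem_cycle.
Qed.

Lemma card_ord d : #|[set z : gT | #[z] == d]| = ((d %| q) * totient d + (d == 2) * q)%N.
Proof.
have [ox _] := ox_oy.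
rewrite -(cardsID <[x]> [set z : gT | #[z] == d]).
congr (_ + _)%N.
  by rewrite -card_in; apply: eq_card => z; rewrite !inE andbC.
have -> : [set z : gT | #[z] == d] :\: <[x]> = if d == 2 then ~: <[x]> else set0.
  apply/setP => z; rewrite !inE; case: (boolP (z \in <[x]>)) => zx /=; first by case: ifP; rewrite ?inE ?zx.
  by rewrite ord_out // eq_sym; case: (d == 2); rewrite ?inE ?zx.
case: (d == 2); last by rewrite cards0 mul0n.
have := cardsC <[x]>; rewrite -cardsT cardG -orderE ox -addnn mul1n; lia.
Qed.
End LayerA.

Section LayerB.
Variable gT : finGroupType.

Lemma od_adj_sym (a b : gT) : od_adj a b = od_adj b a.
Proof. by rewrite /od_adj eq_sym orbC. Qed.

Lemma od_adj_neq (a b : gT) : od_adj a b -> a != b.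
Proof. by rewrite /od_adj => /andP[h _]; apply: contra h => /eqP ->. Qed.

Lemma edges2 : (2 * #|od_edges gT|)%N = #|[set p : gT * gT | od_adj p.1 p.2]|.
Proof.
set P := [set p : gT * gT | od_adj p.1 p.2].
rewrite -[#|P|]sum1_card (@partition_big_imset _ _ _ _ _ (fun p : gT * gT => [set p.1; p.2]) P (fun _ => 1%N)) /=.
rewrite -/(od_edges gT) mulnC -sum_nat_const.
apply: eq_bigr => e /imsetP [[a b] pab ->] /=.
have ab : od_adj a b by move: pab; rewrite inE.
rewrite sum1dep_card.
have -> : [set p : gT * gT | (p \in P) && ([set p.1; p.2] == [set a; b])] = [set (a, b); (b, a)].
  apply/setP => [[c d]]; rewrite !inE /= !xpair_eqE.
  apply/andP/idP.
    case=> cd /eqP E.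
    have cn := od_adj_neq cd.
    have : c \in [set a; b] by rewrite -E set21.
    have : d \in [set a; b] by rewrite -E set22.
    rewrite !inE.
    by case/orP => /eqP ?; case/orP => /eqP ?; subst; rewrite ?eqxx ?orbT //; move: cn; rewrite eqxx.
  case/orP => /andP[/eqP -> /eqP ->]; split => //; first by rewrite od_adj_sym.
  by rewrite setUC.
rewrite cards2; case: eqP => //= [[e1 e2]].
by move: (od_adj_neq ab); rewrite e1 eqxx.
Qed.

Lemma pairs_sum : #|[set p : gT * gT | od_adj p.1 p.2]| =
  \sum_(a : gT) \sum_(b : gT) (od_adj a b : nat).
Proof.
rewrite -sum1dep_card pair_big /= big_mkcond /=.
by apply: eq_bigr => p _; case: (od_adj _ _).
Qed.

Lemma order_partition (F : nat -> nat) :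
  \sum_(a : gT) F #[a]%g =
  \sum_(d <- divisors #|gT|) #|[set z : gT | #[z]%g == d]| * F d.
Proof.
transitivity (\sum_(a : gT) \sum_(d <- divisors #|gT| | #[a]%g == d) F d).
  apply: eq_bigr => a _; rewrite big_mkcond (bigD1_seq #[a]%g) ?divisors_uniq //=.
    rewrite eqxx big1 ?addn0 // => d /negbTE; rewrite eq_sym => -> //.
  rewrite -dvdn_divisors; last by rewrite -cardsT cardG_gt0.
  rewrite -cardsT.
  by apply: (order_dvdG (G:=[set: gT]%G)); rewrite inE.
transitivity (\sum_(d <- divisors #|gT|) \sum_(a : gT | #[a]%g == d) F d).
  exact: (exchange_big_dep xpredT).
apply: eq_bigr => d _.
by rewrite -sum_nat_const; apply: eq_bigl => a; rewrite inE.
Qed.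
End LayerB.

Lemma sum_divisors_ord (k : nat) (f : nat -> nat) : 0 < k ->
  \sum_(e <- divisors k) f e = \sum_(e < k.+1 | e %| k) f e.
Proof.
move=> k0; rewrite -(big_mkord (fun e => e %| k)) -[RHS]big_filter.

suff p : perm_eq (divisors k) [seq e <- index_iota 0 k.+1 | e %| k] by exact: (@perm_big _ _ _ _ _ _ xpredT f p).
apply: uniq_perm; first exact: divisors_uniq.
  by apply: filter_uniq; apply: iota_uniq.
move=> e; rewrite mem_filter /index_iota mem_iota /= add0n subn0 -dvdn_divisors //.
by case: (boolP (e %| k)) => //= h; rewrite ltnS dvdn_leq.
Qed.

Lemma sum_totient_divisors k : 0 < k -> \sum_(e <- divisors k) totient e = k.
Proof. by move=> k0; rewrite sum_divisors_ord // sum_totient_dvd. Qed.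

Lemma divisors_gt0 k e : e \in divisors k -> 0 < e.
Proof.
case: e => // ; case: k => [|k] //; rewrite -dvdn_divisors // dvd0n.
Qed.

Lemma perm_filter_dvd n d : 0 < n -> d %| n ->
  perm_eq [seq e <- divisors n | e %| d] (divisors d).
Proof.
move=> n0 dn; have d0 : 0 < d by move: dn; case: d => //; rewrite dvd0n => /eqP h; rewrite h in n0.
apply: uniq_perm; first by apply: filter_uniq; exact: divisors_uniq.
  exact: divisors_uniq.
move=> e; rewrite mem_filter -!dvdn_divisors //.
by case: (boolP (e %| d)) => //= h; apply: dvdn_trans h dn.
Qed.

Lemma perm_filter_mul n d : 0 < n -> d %| n ->
  perm_eq [seq e <- divisors n | d %| e] [seq l * d | l <- divisors (n %/ d)].
Proof.
move=> n0 dn; have d0 : 0 < d by move: dn; case: d => //; rewrite dvd0n => /eqP h; rewrite h in n0.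
have nd0 : 0 < n %/ d by rewrite divn_gt0 // dvdn_leq.
apply: uniq_perm; first by apply: filter_uniq; exact: divisors_uniq.
  rewrite map_inj_uniq ?divisors_uniq // => a b /eqP; rewrite eqn_pmul2r // => /eqP.
  done.
move=> e; rewrite mem_filter -dvdn_divisors //.
apply/andP/mapP.
  case=> de en; exists (e %/ d); last by rewrite divnK.
  by rewrite -dvdn_divisors // dvdn_divRL // divnK.
case=> l; rewrite -dvdn_divisors // => ln ->; split; first exact: dvdn_mull.
by rewrite -dvdn_divRL.
Qed.

Section Arith.
Variable n : nat.
Hypotheses (n_gt0 : 0 < n) (n_even : 2 %| n).

Definition Nf d := ((d %| n) * totient d + (d == 2) * n)%N.
Definition gf d e : bool := (d != e) && ((d %| e) || (e %| d)).
Definition degf d := \sum_(e <- divisors n) Nf e * gf d e.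
Definition Sf d := \sum_(l <- divisors (n %/ d)) totient (l * d).

Lemma red_divisors (h : nat -> nat) :
  \sum_(d <- divisors n.*2) Nf d * h d = \sum_(d <- divisors n) Nf d * h d.
Proof.
have p : perm_eq (divisors n) [seq d <- divisors n.*2 | d %| n].
  apply: uniq_perm; first exact: divisors_uniq.
    by apply: filter_uniq; exact: divisors_uniq.
  move=> d; rewrite mem_filter -!dvdn_divisors ?double_gt0 //.
  by case: (boolP (d %| n)) => //= h'; rewrite -muln2 dvdn_mulr.
rewrite (perm_big _ p) big_filter [RHS]big_mkcond /=; apply: eq_bigr => d _.
case: (boolP (d %| n)) => // dn.
rewrite /Nf (negbTE dn); case: eqP => [e2|] //.
by rewrite e2 n_even in dn.
Qed.

Lemma gf_term d e : 0 < d -> 0 < e ->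
  (gf d e + 2 * (e == d) = (e %| d) + (d %| e))%N.
Proof.
move=> d0 e0; rewrite /gf; case: (eqVneq e d) => [->|ne]; first by rewrite dvdnn.
rewrite /= muln0 addn0.
case: (boolP (d %| e)) => de; case: (boolP (e %| d)) => ed //=.
by move: ne; rewrite eqn_dvd ed de.
Qed.

Lemma sum_pick (F : nat -> nat) d : d \in divisors n ->
  \sum_(e <- divisors n) F e * (e == d) = F d.
Proof.
move=> dD; rewrite (bigD1_seq d) ?divisors_uniq //= eqxx muln1 big1 ?addn0 //.
by move=> e /negbTE ->; rewrite muln0.
Qed.

Lemma sum_pick_const (c : nat) d : d \in divisors n ->
  \sum_(e <- divisors n) c * (e == d) = c.
Proof. by move=> dD; rewrite (sum_pick (fun=> c) dD). Qed.

Lemma deg_eq d : d \in divisors n ->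
  (degf d + 2 * Nf d = d + n * (2 %| d) + Sf d + n * (d %| 2))%N.
Proof.
move=> dD; have d0 := divisors_gt0 dD.
have dn : d %| n by rewrite dvdn_divisors.
have e1 : (2 * Nf d = \sum_(e <- divisors n) Nf e * (2 * (e == d)))%N.
  by rewrite -(sum_pick Nf dD) big_distrr /=; apply: eq_bigr => e _; rewrite mulnCA.
rewrite e1 /degf -big_split /=.
rewrite (eq_big_seq (fun e => Nf e * (e %| d) + Nf e * (d %| e))%N); last first.
  by move=> e eD; rewrite -mulnDr -mulnDr gf_term // (divisors_gt0 eD).
rewrite big_split /=.
have T1 : (\sum_(e <- divisors n) Nf e * (e %| d) = d + n * (2 %| d))%N.
  rewrite /Nf (eq_big_seq (fun e => totient e * (e %| d) + n * ((2 %| d) * (e == 2)))%N); last first.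
    move=> e eD; have en : e %| n by rewrite dvdn_divisors.
    rewrite en mul1n mulnDl; congr (_ + _)%N; case: (eqVneq e 2) => [->|_]; rewrite ?mul0n ?muln0 ?mul1n ?muln1 // mulnC.
  rewrite big_split /= -big_distrr /= sum_pick_const; last by rewrite -dvdn_divisors.
  congr (_ + _)%N.
  transitivity (\sum_(e <- divisors n | e %| d) totient e).
    by rewrite [RHS]big_mkcond /=; apply: eq_bigr => e _; case: (e %| d); rewrite ?muln1 ?muln0.
  rewrite -big_filter (perm_big _ (perm_filter_dvd n_gt0 dn)).
  exact: sum_totient_divisors.
have T2 : (\sum_(e <- divisors n) Nf e * (d %| e) = Sf d + n * (d %| 2))%N.
  rewrite /Nf (eq_big_seq (fun e => totient e * (d %| e) + n * ((d %| 2) * (e == 2)))%N); last first.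
    move=> e eD; have en : e %| n by rewrite dvdn_divisors.
    rewrite en mul1n mulnDl; congr (_ + _)%N; case: (eqVneq e 2) => [->|_]; rewrite ?mul0n ?muln0 ?mul1n ?muln1 // mulnC.
  rewrite big_split /= -big_distrr /= sum_pick_const; last by rewrite -dvdn_divisors.
  congr (_ + _)%N.
  transitivity (\sum_(e <- divisors n | d %| e) totient e).
    by rewrite [RHS]big_mkcond /=; apply: eq_bigr => e _; case: (d %| e); rewrite ?muln1 ?muln0.
  by rewrite -big_filter (perm_big _ (perm_filter_mul n_gt0 dn)) big_map.
rewrite T1 T2; lia.
Qed.
End Arith.

Section Final.
Import GRing.Theory.
Local Open Scope ring_scope.
Variable n : nat.
Hypotheses (n_gt0 : (0 < n)%N) (n_even : (2 %| n)%N).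

Lemma pick_int (F : nat -> int) d : d \in divisors n ->
  \sum_(e <- divisors n) (if e == d then F e else 0) = F d.
Proof.
move=> dD; rewrite (bigD1_seq d) ?divisors_uniq //= eqxx big1 ?addr0 //.
by move=> e /negbTE ->.
Qed.

Lemma split4 (h : nat -> int) :
  \sum_(d <- divisors n) h d = h 1%N + h 2%N
   + \sum_(d <- divisors n | (1 < d)%N && odd d) h d
   + \sum_(d <- divisors n | (2 < d)%N && ~~ odd d) h d.
Proof.
have D1 : (1%N \in divisors n) by exact: divisor1.
have D2 : (2%N \in divisors n) by rewrite -dvdn_divisors.
rewrite -(pick_int h D1) -(pick_int h D2).
rewrite (big_mkcond (fun d => (1 < d)%N && odd d)) (big_mkcond (fun d => (2 < d)%N && ~~ odd d)) -!big_split /=.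
apply: eq_big_seq => d dD; have := divisors_gt0 dD.
case: d {dD} => [|[|[|d]]] //= _; rewrite ?addr0 ?add0r //.
by case: (odd d); rewrite /= ?addr0 ?add0r.
Qed.

Lemma final_arith :
  ((\sum_(d <- divisors n) Nf n d * degf n d)%N%:Z =
   (2 * n)%N%:Z - 1
   + (n.+1)%:Z * (\sum_(l <- divisors (n %/ 2)) totient (2 * l))%N%:Z
   + \sum_(m <- divisors n | (1 < m)%N && odd m)
       (m%:Z - 2 * (totient m)%:Z
        + (\sum_(l <- divisors (n %/ m)) totient (l * m))%N%:Z) * (totient m)%:Z
   + \sum_(m <- divisors n | (2 < m)%N && ~~ odd m)
       (n%:Z + m%:Z - 2 * (totient m)%:Z
        + (\sum_(l <- divisors (n %/ m)) totient (l * m))%N%:Z) * (totient m)%:Z)%R.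
Proof.
rewrite (big_morph Posz PoszD (erefl _)) split4.
have D1 : (1%N \in divisors n) by exact: divisor1.
have D2 : (2%N \in divisors n) by rewrite -dvdn_divisors.
congr (_ + _ + _ + _).
- have := deg_eq n_gt0 n_even D1.
  have S1 : Sf n 1%N = n by rewrite /Sf divn1 (eq_bigr totient) ?sum_totient_divisors // => l _; rewrite muln1.
  rewrite S1 /Nf dvd1n /= => h.
  have t1 : totient 1 = 1%N by [].
  rewrite t1 in h; have e : degf n 1%N = (2 * n - 1)%N by lia.
  rewrite mul1n e; lia.
- have := deg_eq n_gt0 n_even D2.
  rewrite /Nf n_even /= => h.
  have t2 : totient 2 = 1%N by [].
  rewrite t2 in h; have e : degf n 2%N = Sf n 2%N by lia.
  rewrite e PoszM /Sf; congr (_ * Posz _)%R; first by rewrite t2; lia.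
  by apply: eq_bigr => l _; rewrite mulnC.
- rewrite big_seq_cond [RHS]big_seq_cond; apply: eq_bigr => d /andP[dD /andP[d1 od]].
  have := deg_eq n_gt0 n_even dD.
  have dn : (d %| n)%N by rewrite dvdn_divisors.
  have d2 : (d %| 2)%N = false.
    apply/negbTE/negP => /(dvdn_leq (isT : (0 < 2)%N)) h.
    have e : d = 2%N by apply/eqP; rewrite eqn_leq h d1.
    by move: od; rewrite e.
  rewrite /Nf dn d2 dvdn2 od /= mul1n muln0 addn0 => h.
  have e : (degf n d)%:Z = d%:Z - 2 * (totient d)%:Z + (Sf n d)%:Z by lia.
  have ne2 : (d == 2%N) = false by apply/negbTE; apply: contraL od => /eqP ->.
  by rewrite ne2 mul0n addn0 PoszM e mulrC.
- rewrite big_seq_cond [RHS]big_seq_cond; apply: eq_bigr => d /andP[dD /andP[d2' od]].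
  have := deg_eq n_gt0 n_even dD.
  have dn : (d %| n)%N by rewrite dvdn_divisors.
  have d2 : (d %| 2)%N = false.
    by apply/negbTE/negP => /(dvdn_leq (isT : (0 < 2)%N)) h; lia.
  have ne2 : (d == 2%N) = false by apply/eqP => h; lia.
  rewrite /Nf dn d2 dvdn2 od ne2 /= mul1n muln0 addn0 muln1 => h.
  have e : (degf n d)%:Z = n%:Z + d%:Z - 2 * (totient d)%:Z + (Sf n d)%:Z by lia.
  by rewrite mul0n addn0 PoszM e mulrC.
Qed.
End Final.

Unset Implicit Arguments.

Theorem mainTheorem20 (n : nat) :
  (3 <= n)%N -> ~~ odd n ->
  ((2 * #|od_edges (dihedral_gtype n.*2)|)%N%:Z =
   (2 * n)%N%:Z - 1
   + (n.+1)%:Z * (\sum_(l <- divisors (n %/ 2)) totient (2 * l))%N%:Z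
   + \sum_(m <- divisors n | (1 < m)%N && odd m)
       (m%:Z - 2 * (totient m)%:Z
        + (\sum_(l <- divisors (n %/ m)) totient (l * m))%N%:Z) * (totient m)%:Z
   + \sum_(m <- divisors n | (2 < m)%N && ~~ odd m)
       (n%:Z + m%:Z - 2 * (totient m)%:Z
        + (\sum_(l <- divisors (n %/ m)) totient (l * m))%N%:Z) * (totient m)%:Z)%R.
Proof.
move=> n3 ev.
have n_gt0 : (0 < n)%N by lia.
have q1 : (1 < n)%N by lia.
have n_even : (2 %| n)%N by rewrite dvdn2.
set gT := dihedral_gtype n.*2.
have cardG : #|[set: gT]| = n.*2 by exact: card_dihedral.
have cT : #|gT| = n.*2 by rewrite -cardsT.
have := Grp_dihedral q1 [set: gT]%G; rewrite homg_refl => /esym /existsP [[x y]] /=.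
move=> /eqP [defG xq y2 xy].
have NN : forall d, #|[set z : gT | #[z]%g == d]| = Nf n d.
  by move=> d; rewrite (card_ord n_gt0 defG cardG xq y2 xy).
suff Hnat : (2 * #|od_edges gT| = \sum_(d <- divisors n) Nf n d * degf n d)%N.
  by rewrite Hnat; exact: final_arith.
rewrite edges2 pairs_sum.
transitivity (\sum_(a : gT) degf n #[a]%g).
  apply: eq_bigr => a _.
  transitivity (\sum_(e <- divisors #|gT|) #|[set z : gT | #[z]%g == e]| * nat_of_bool (gf #[a]%g e))%N.
    exact: (order_partition gT (fun k => nat_of_bool (gf #[a]%g k))).
  rewrite cT (eq_bigr (fun e => Nf n e * nat_of_bool (gf #[a]%g e))%N); last by move=> e _; rewrite NN.
  by rewrite red_divisors.
rewrite order_partition cT (eq_bigr (fun e => Nf n e * degf n e)%N); last by move=> e _; rewrite NN.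
by rewrite red_divisors.
Qed.
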